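(* Consider the multiobjective optimal control setting, Assumption A, Assumption B and Algorithm 1 described in the context, and let $x_0\in\mathbb{X}_N$. Then the MPC feedback $\mu^N:\mathbb{N}_0\times\mathbb{X}\to\mathbb{U}$ defined by Algorithm 1 has the infinite-horizon averaged closed-loop performance \[\bar J_i^\infty(x_0,\mu^N):=\limsup_{K\to\infty}\frac1K\sum_{k=0}^{K-1}\ell_i\big(x_\mu(k,x_0),\mu^N(k,x_\mu(k,x_0))\big)\le\ell_i(x^e,u^e)\] for all objectives $i\in\{2,\dots,s\}$.
   Context: Let $f:\mathbb{R}^n\times\mathbb{R}^m\to\mathbb{R}^n$ be continuous and consider $x(k+1)=f(x(k),u(k))$, $x(0)=x_0$; $x_{\mathbf{u}}(k,x_0)$ denotes the solution for control sequence $\mathbf u$. Let $\mathbb{X}\subseteq\mathbb{R}^n$, $\mathbb{U}\subseteq\mathbb{R}^m$, $\mathbb{X}_0\subseteq\mathbb{X}$ be nonempty; horizons $N\ge2$, objectives $s\ge2$. $\mathbb{U}^N(x_0)$ is the set of $\mathbf{u}\in\mathbb{U}^N$ with $x_{\mathbf{u}}(k,x_0)\in\mathbb{X}$ for $k=1,\dots,N-1$ and $x_{\mathbf{u}}(N,x_0)\in\mathbb{X}_0$; $\mathbb{X}_N=\{x_0\in\mathbb{X}:\mathbb{U}^N(x_0)\neq\emptyset\}$. With stage costs $\ell_i:\mathbb{X}\times\mathbb{U}\to\mathbb{R}$ ($i=1,\dots,s$) and continuous $F_1:\mathbb{X}_0\to\mathbb{R}_{\ge0}$: $J_1^N(x_0,\mathbf{u})=\sum_{k=0}^{N-1}\ell_1(x_{\mathbf{u}}(k,x_0),u(k))+F_1(x_{\mathbf{u}}(N,x_0))$,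 $J_i^N(x_0,\mathbf{u})=\sum_{k=0}^{N-1}\ell_i(x_{\mathbf{u}}(k,x_0),u(k))$ for $i\ge2$. $\mathbf{u}^\star\in\mathbb{U}^N(x_0)$ is efficient if no $\mathbf{u}\in\mathbb{U}^N(x_0)$ satisfies $J_i^N(x_0,\mathbf{u})\le J_i^N(x_0,\mathbf{u}^\star)$ for all $i$ with strict inequality for some $i$; $\mathbb{U}^N_{\mathcal P}(x_0)$ is the efficient set. $\mathcal{J}^N(x_0)$ is the set of vectors $(J_i^N(x_0,\mathbf u))_{i=1}^s$, $\mathbf u\in\mathbb{U}^N(x_0)$, $\mathcal{J}^N_{\mathcal P}(x_0)$ the subset for efficient $\mathbf u$; external stability means every $y\in\mathcal{J}^N(x_0)$ dominates componentwise some $y_{\mathcal P}\in\mathcal{J}^N_{\mathcal P}(x_0)$. $\mathcal K_\infty$: continuous strictly increasing unbounded functions $\mathbb{R}_{\ge0}\to\mathbb{R}_{\ge0}$ vanishing at $0$. Assumption A: (i) $(x^e,u^e)\in\mathbb{X}\times\mathbb{U}$ with $f(x^e,u^e)=x^e$; (ii) $\lambda_1:\mathbb{X}\to\mathbb{R}$ bounded below, $\lambda_1(x^e)=0$, $\alpha_{\ell,1}\in\mathcal K_\infty$ with $\ell_1(x,u)-\ell_1(x^e,u^e)+\lambda_1(x)-\lambda_1(f(x,u))\ge\alpha_{\ell,1}(\|x-x^e\|+\|u-u^e\|)$ on $\mathbb{X}\times\mathbb{U}$; (iii) all $\ell_i$ continuous; (iv) $x^e\in\mathbb{X}_0$ and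 $\kappa:\mathbb{X}_0\to\mathbb{U}$ with $f(x,\kappa(x))\in\mathbb{X}_0$ and $F_1(f(x,\kappa(x)))+\ell_1(x,\kappa(x))\le F_1(x)+\ell_1(x^e,u^e)$ for all $x\in\mathbb{X}_0$; (v) $\mathcal{J}^N_{\mathcal P}(x)$ externally stable for $\mathcal{J}^N(x)$ for all $x\in\mathbb{X}_N$. Assumption B: there are $\gamma_{F_1},\gamma_{\lambda_1}\in\mathcal K_\infty$ with (i) $F_1(x^e)=0$ and $|F_1(x)-F_1(x^e)|\le\gamma_{F_1}(\|x-x^e\|)$ for all $x\in\mathbb{X}_0$; (ii) $|\lambda_1(x)-\lambda_1(x^e)|\le\gamma_{\lambda_1}(\|x-x^e\|)$ for all $x\in\mathbb{X}$. Algorithm 1 ($k\in\mathbb N_0$): $x(0)=x_0$, choose any $\mathbf{u}^\star_{x(0)}\in\mathbb{U}^N_{\mathcal P}(x(0))$; for $k\ge1$ choose $\mathbf{u}^\star_{x(k)}\in\mathbb{U}^N_{\mathcal P}(x(k))$ with $J_1^N(x(k),\mathbf{u}^\star_{x(k)})\le J_1^N(x(k),\mathbf{u}_{x(k)})$, where $\mathbf{u}_{x(k+1)}:=(u^\star_{x(k)}(1),\dots,u^\star_{x(k)}(N-1),\kappa(x_{\mathbf{u}^\star_{x(k)}}(N,x(k))))$. Feedback $\mu^N(k,x(k)):=u^\star_{x(k)}(0)$, $x(k+1)=f(x(k),\mu^N(k,x(k)))$, $x_\mu(k,x_0):=x(k)$. The statement applies to any admissible choices of efficient solutions. *)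

(* Defs.v *)
From HB Require Import structures.
From mathcomp Require Import all_boot all_order all_algebra.
From mathcomp Require Import all_classical all_reals all_analysis.
Set Implicit Arguments. Unset Strict Implicit. Unset Printing Implicit Defensive.
Import Order.TTheory GRing.Theory Num.Theory.
Import numFieldNormedType.Exports.
Local Open Scope classical_set_scope.
Local Open Scope ring_scope.

Section MOMPC.
Variables (R : realType) (n m : nat).
Notation st := 'rV[R]_n.
Notation ct := 'rV[R]_m.

(* class K_infinity: functions R_{>=0} -> R_{>=0}, continuous, strictly
   increasing, unbounded, vanishing at 0 (only values on [0,oo) matter) *)
Definition Kinf (a : R -> R) : Prop :=
  [/\ a 0 = 0,
      {within [set x : R | 0 <= x], continuous a},
      (forall x y, 0 <= x -> x < y -> a x < a y)
    & (forall M : R, exists x, 0 <= x /\ M <= a x)].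

Fixpoint traj (f : st -> ct -> st) (x0 : st) (u : nat -> ct) (k : nat) : st :=
  match k with
  | 0 => x0
  | k'.+1 => f (traj f x0 u k') (u k')
  end.

(* u in U^N(x0); only u 0, ..., u (N-1) are relevant *)
Definition admissible (f : st -> ct -> st) (X : set st) (U : set ct) (X0 : set st)
  (N : nat) (x0 : st) (u : nat -> ct) : Prop :=
  [/\ (forall k, (k < N)%N -> U (u k)),
      (forall k, (1 <= k)%N -> (k <= N.-1)%N -> X (traj f x0 u k))
    & X0 (traj f x0 u N)].

Definition feasible_set (f : st -> ct -> st) (X : set st) (U : set ct) (X0 : set st)
  (N : nat) : set st :=
  [set x0 | X x0 /\ exists u, admissible f X U X0 N x0 u].

(* J_i^N(x0,u); objective with index 0 : 'I_s is objective 1 (with terminal cost F1) *)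
Definition Jcost (s : nat) (f : st -> ct -> st) (l : 'I_s -> st -> ct -> R)
  (F1 : st -> R) (N : nat) (x0 : st) (u : nat -> ct) (i : 'I_s) : R :=
  \sum_(k < N) l i (traj f x0 u k) (u k)
  + (if (i : nat) == 0%N then F1 (traj f x0 u N) else 0).

Definition efficient (s : nat) (f : st -> ct -> st) (X : set st) (U : set ct)
  (X0 : set st) (l : 'I_s -> st -> ct -> R) (F1 : st -> R) (N : nat)
  (x0 : st) (u : nat -> ct) : Prop :=
  admissible f X U X0 N x0 u /\
  ~ (exists v, admissible f X U X0 N x0 v /\
       (forall i, Jcost f l F1 N x0 v i <= Jcost f l F1 N x0 u i) /\
       (exists i, Jcost f l F1 N x0 v i < Jcost f l F1 N x0 u i)).

Definition externally_stable (s : nat) (f : st -> ct -> st) (X : set st) (U : set ct)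
  (X0 : set st) (l : 'I_s -> st -> ct -> R) (F1 : st -> R) (N : nat) (x : st) : Prop :=
  forall u, admissible f X U X0 N x u ->
    exists2 up, efficient f X U X0 l F1 N x up &
      forall i, Jcost f l F1 N x up i <= Jcost f l F1 N x u i.

Definition shifted_candidate (f : st -> ct -> st) (kappa : st -> ct) (N : nat)
  (x : st) (u : nat -> ct) : nat -> ct :=
  fun j => if (j.+1 < N)%N then u j.+1 else kappa (traj f x u N).

End MOMPC.

(* Main.v *)
Require Import Defs.
From HB Require Import structures.
From mathcomp Require Import all_boot all_order all_algebra.
From mathcomp Require Import all_classical all_reals all_analysis.
From mathcomp Require Import lra.
Import Order.TTheory GRing.Theory Num.Theory.
Import numFieldNormedType.Exports.
Local Open Scope classical_set_scope.
Local Open Scope ring_scope.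

Theorem theorem4p8 (R : realType) (n m N s : nat)
  (f : 'rV[R]_n -> 'rV[R]_m -> 'rV[R]_n)
  (X : set 'rV[R]_n) (U : set 'rV[R]_m) (X0 : set 'rV[R]_n)
  (l : 'I_s -> 'rV[R]_n -> 'rV[R]_m -> R) (F1 : 'rV[R]_n -> R)
  (xe : 'rV[R]_n) (ue : 'rV[R]_m) (lambda1 : 'rV[R]_n -> R)
  (alpha1 gammaF gammaL : R -> R) (kappa : 'rV[R]_n -> 'rV[R]_m)
  (i0 : 'I_s) (x0 : 'rV[R]_n) (xs : nat -> 'rV[R]_n) (us : nat -> nat -> 'rV[R]_m) :
  (* setting *)
  (2 <= N)%N -> (2 <= s)%N ->
  (* i0 is objective 1 *)
  (i0 : nat) = 0%N ->
  continuous (fun p : 'rV[R]_n * 'rV[R]_m => f p.1 p.2) ->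
  X0 `<=` X ->
  {within X0, continuous F1} ->
  (forall x, X0 x -> 0 <= F1 x) ->
  (* Assumption A (i) *)
  X xe -> U ue -> f xe ue = xe ->
  (* Assumption A (ii) *)
  (exists M, forall x, X x -> M <= lambda1 x) ->
  lambda1 xe = 0 ->
  Kinf alpha1 ->
  (forall x u, X x -> U u -> X (f x u) ->
     alpha1 (`|x - xe| + `|u - ue|)
       <= l i0 x u - l i0 xe ue + lambda1 x - lambda1 (f x u)) ->
  (* Assumption A (iii) *)
  (forall i, {within [set p : 'rV[R]_n * 'rV[R]_m | X p.1 /\ U p.2],
              continuous (fun p => l i p.1 p.2)}) ->
  (* Assumption A (iv) *)
  X0 xe ->
  (forall x, X0 x -> U (kappa x) /\ X0 (f x (kappa x))) ->
  (forall x, X0 x ->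
     F1 (f x (kappa x)) + l i0 x (kappa x) <= F1 x + l i0 xe ue) ->
  (* Assumption A (v) *)
  (forall x, feasible_set f X U X0 N x -> externally_stable f X U X0 l F1 N x) ->
  (* Assumption B *)
  Kinf gammaF -> Kinf gammaL ->
  F1 xe = 0 ->
  (forall x, X0 x -> `|F1 x - F1 xe| <= gammaF `|x - xe|) ->
  (forall x, X x -> `|lambda1 x - lambda1 xe| <= gammaL `|x - xe|) ->
  (* initial condition *)
  feasible_set f X U X0 N x0 ->
  (* Algorithm 1: any admissible choice of efficient solutions *)
  xs 0%N = x0 ->
  (forall k, efficient f X U X0 l F1 N (xs k) (us k)) ->
  (forall k, Jcost f l F1 N (xs k.+1) (us k.+1) i0
             <= Jcost f l F1 N (xs k.+1)
                  (shifted_candidate f kappa N (xs k) (us k)) i0) ->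
  (forall k, xs k.+1 = f (xs k) (us k 0%N)) ->
  (* conclusion *)
  forall i : 'I_s, (0 < i)%N ->
    (limn_esup (fun K : nat =>
       ((K%:R)^-1 * \sum_(k < K) l i (xs k) (us k 0%N))%:E)
     <= (l i xe ue)%:E)%E.
Proof.
move=> N2 s2 i00 _ X0X _ F1ge0 Xxe Uue fe [M HM] _ Kalpha Hdiss Hcont _ Hkappa
  HF1 _ _ _ _ _ _ [Xx0 _] xs0 Heff Hshift Hxs i i_gt0.
case: N N2 Hshift Heff => [|[|N']] // _ Hshift Heff.
set N := N'.+2.
have Jc k : Jcost f l F1 N (xs k) (us k) i0 =
    \sum_(j < N) l i0 (traj f (xs k) (us k) j) (us k j) + F1 (traj f (xs k) (us k) N).
  by rewrite /Jcost i00 eqxx.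
set V := fun k => Jcost f l F1 N (xs k) (us k) i0.
set le := l i0 xe ue.
have XX k : X (xs k).
  case: k => [|k]; first by rewrite xs0.
  have [[_ H _] _] := Heff k.
  by rewrite Hxs; apply: (H 1%N).
have Xtraj k j : (j <= N)%N -> X (traj f (xs k) (us k) j).
  have [[_ H1 H2] _] := Heff k.
  case: j => [|j] Hj; first exact: XX.
  have [Hj'|Hj'] := ltnP j.+1 N.
    by apply: H1 => //; rewrite -ltnS.
  have -> : j.+1 = N by apply/eqP; rewrite eqn_leq Hj Hj'.
  exact: X0X.
have Step1 k : V k.+1 <= V k - l i0 (xs k) (us k 0%N) + le.
  apply: (le_trans (Hshift k)).
  set v := shifted_candidate f kappa N (xs k) (us k).
  set t := traj f (xs k) (us k).
  set t' := traj f (xs k.+1) v.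
  have tt j : (j <= N'.+1)%N -> t' j = t j.+1.
    elim: j => [|j IH] Hj; first by rewrite /t' /= Hxs.
    change (f (t' j) (v j) = f (t j.+1) (us k j.+1)).
    rewrite IH ?(ltnW Hj) //.
    by rewrite /v /shifted_candidate ltnS Hj.
  have tN : t' N = f (t N) (kappa (t N)).
    change (f (t' N'.+1) (v N'.+1) = f (t N) (kappa (t N))).
    by rewrite tt // /v /shifted_candidate ltnn.
  have [[HU _ HX0] _] := Heff k.
  have E1 : Jcost f l F1 N (xs k.+1) v i0 = \sum_(j < N'.+1) l i0 (t j.+1) (us k j.+1)
      + l i0 (t N) (kappa (t N)) + F1 (f (t N) (kappa (t N))).
    rewrite /Jcost i00 eqxx big_ord_recr -/t' tN.
    congr (_ + _ + _).
      apply: eq_bigr => j _.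
      rewrite tt; last by rewrite /= ltnW.
      by rewrite /v /shifted_candidate /= ltnS ltn_ord.
    rewrite tt //.
    by rewrite /v /shifted_candidate /= ltnn.
  have E2 : V k = l i0 (t 0%N) (us k 0%N) + \sum_(j < N'.+1) l i0 (t j.+1) (us k j.+1)
      + F1 (t N).
    by rewrite /V /Jcost i00 eqxx big_ord_recl.
  rewrite E1 E2.
  have := HF1 _ HX0; rewrite -/t -/le /=.
  lra.
have [a0 _ amono _] := Kalpha.
have a_ge0 x : 0 <= x -> 0 <= alpha1 x.
  rewrite le_eqVlt => /orP[/eqP<-|xpos]; first by rewrite a0.
  by rewrite -a0 ltW // amono.
have Dk k j : (j < N)%N ->
    le - lambda1 (traj f (xs k) (us k) j) + lambda1 (traj f (xs k) (us k) j.+1)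
    <= l i0 (traj f (xs k) (us k) j) (us k j).
  move=> Hj.
  have [[HU _ _] _] := Heff k.
  have := Hdiss _ _ (Xtraj k j (ltnW Hj)) (HU j Hj) (Xtraj k j.+1 Hj).
  have := a_ge0 (`|traj f (xs k) (us k) j - xe| + `|us k j - ue|).
  rewrite addr_ge0 // => /(_ isT) H1.
  rewrite /le /=. lra.
have Step2 k : N%:R * le + M <= V k + lambda1 (xs k).
  have part J : (J <= N)%N -> J%:R * le - lambda1 (xs k) + lambda1 (traj f (xs k) (us k) J)
      <= \sum_(j < J) l i0 (traj f (xs k) (us k) j) (us k j).
    elim: J => [|J IH] HJ; first by rewrite big_ord0 mul0r /=; lra.
    rewrite big_ord_recr /= -addn1 natrD mulrDl mul1r.
    have := IH (ltnW HJ); have := Dk k J HJ. lra.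
  have := part N (leqnn N).
  have [[_ _ HX0] _] := Heff k.
  have := F1ge0 _ HX0.
  have := HM _ (X0X _ HX0).
  rewrite /V /Jcost i00 eqxx. lra.
set d := fun k => `|xs k - xe| + `|us k 0%N - ue|.
set a := fun k => alpha1 (d k).
have d_ge0 k : 0 <= d k by rewrite /d addr_ge0.
have a_ge0' k : 0 <= a k by apply: a_ge0.
have Ak k : a k <= l i0 (xs k) (us k 0%N) - le + lambda1 (xs k) - lambda1 (xs k.+1).
  have [[HU _ _] _] := Heff k.
  have := Hdiss _ _ (XX k) (HU 0%N isT); rewrite -Hxs => /(_ (XX k.+1)).
  by rewrite /a /d /le.
have Sum K : \sum_(k < K) a k <= V 0%N + lambda1 (xs 0%N) - V K - lambda1 (xs K).
  elim: K => [|K IH]; first by rewrite big_ord0; lra.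
  rewrite big_ord_recr /=.
  have := Ak K; have := Step1 K. lra.
set C := V 0%N + lambda1 (xs 0%N) - N%:R * le - M.
have SumC K : \sum_(k < K) a k <= C.
  have := Sum K; have := Step2 K; rewrite /C. lra.
have cvgA : a @ \oo --> 0.
  apply: cvg_series_cvg_0; apply: nondecreasing_is_cvgn.
    rewrite seriesEnat; apply: nondecreasing_series => k _ _; exact: a_ge0'.
  by exists C => _ [K _ <-]; rewrite seriesEord /=; apply: SumC.
have cvgd : d @ \oo --> 0.
  apply/cvgrPdist_lt => e e0.
  have ae0 : 0 < alpha1 e by rewrite -a0 amono.
  move/cvgrPdist_lt : cvgA => /(_ _ ae0).
  apply: filterS => k; rewrite sub0r normrN ger0_norm // => Hk.
  rewrite sub0r normrN ger0_norm //.
  rewrite ltNge; apply/negP; rewrite le_eqVlt => /orP[/eqP Hek|Hek].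
    by move: Hk; rewrite /a -Hek ltxx.
  have := amono _ _ (ltW e0) Hek; move: Hk; rewrite /a. lra.
have cvgx : xs @ \oo --> xe.
  apply/cvgrPdist_lt => e e0.
  move/cvgrPdist_lt : cvgd => /(_ _ e0).
  apply: filterS => k; rewrite sub0r normrN ger0_norm // distrC => Hk.
  have := normr_ge0 (us k 0%N - ue); move: Hk; rewrite /d. lra.
have cvgu : (fun k => us k 0%N) @ \oo --> ue.
  apply/cvgrPdist_lt => e e0.
  move/cvgrPdist_lt : cvgd => /(_ _ e0).
  apply: filterS => k; rewrite sub0r normrN ger0_norm // distrC => Hk.
  have := normr_ge0 (xs k - xe); move: Hk; rewrite /d. lra.
have cvgP : (fun k => (xs k, us k 0%N)) @ \oo --> (xe, ue) by apply: (cvg_pair cvgx cvgu).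
have := Hcont i; move/subspace_continuousP => /(_ (xe, ue) (conj Xxe Uue)) Hc.
have cvgl : (fun k => l i (xs k) (us k 0%N)) @ \oo --> l i xe ue.
  apply: (cvg_trans _ Hc) => P HP.
  have := cvgP _ HP.
  have HP' : nbhs (xe, ue) (fun p : 'rV[R]_n * 'rV[R]_m => X p.1 /\ U p.2 -> P (l i p.1 p.2)) by exact: HP.
  have := cvgP _ HP'.
  move=> _ H; move: H; rewrite !nbhs_simpl /= => H; apply: filterS H => k /=; apply.
  by split => //; have [[HU _ _] _] := Heff k; apply: HU.
have Hces := cesaro cvgl.
set avg := fun K : nat => K%:R^-1 * \sum_(k < K) l i (xs k) (us k 0%N).
have Havg : avg @ \oo --> l i xe ue.
  rewrite -cvg_shiftS.
  have -> : [sequence avg n.+1]_n = arithmetic_mean (fun k => l i (xs k) (us k 0%N)).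
    by apply/funext => K; rewrite /arithmetic_mean /= seriesEord.
  exact: Hces.
have E : (fun K => (avg K)%:E) @ \oo --> (l i xe ue)%:E.
  by apply: cvg_EFin; [exact: nearW | exact: Havg].
by rewrite (cvg_limn_einf_sup E).2.
Qed.
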